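(* Let $p$ be prime, $n\ge1$, and let $f$, $\lambda$, $e_j$, $f_k$ be as in the context. Let $M:V_2(GF(p^n))\to V_{2n}(\mathbb{Z}_p)$ be the $\mathbb{Z}_p$-linear map sending $e_j$ to the vector with a $1$ in position $2j$ and zeros elsewhere, and $f_j$ to the vector with a $1$ in position $2j+1$ and zeros elsewhere (positions indexed from $0$). Then $M$ is a $\mathbb{Z}_p$-linear isomorphism and for all $u_1,u_2\in V_2(GF(p^n))$, $$M(u_1)\circ M(u_2)=\operatorname{Tr}(u_1\circ u_2).$$ Consequently the images $M(C_\alpha)$, $\alpha\in GF(p^n)$, and $M(C_\infty)$ are $p^n+1$ subspaces of $V_{2n}(\mathbb{Z}_p)$, each of size $p^n$, pairwise intersecting only in $0$, within each of which all symplectic products vanish; hence for each such subspace the tensor products $S_{x_0,y_0}\otimes S_{x_1,y_1}\otimes\cdots\otimes S_{x_{n-1},y_{n-1}}$, $(x_0,y_0,\dots,x_{n-1},y_{n-1})$ in the subspace, pairwise commute.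
   Context: $f(x)=c_0+\cdots+c_{n-1}x^{n-1}+x^n$ is irreducible over $\mathbb{Z}_p$ with $n$ distinct roots $\lambda_1,\dots,\lambda_n$ in $GF(p^n)$, $\lambda$ one of them; elements of $GF(p^n)$ are $\alpha(\lambda)=\sum_{i<n}a_i\lambda^i$, $a_i\in\mathbb{Z}_p$, and $\operatorname{Tr}(\alpha)=\sum_{r=1}^n\alpha(\lambda_r)$. $d_j(\lambda)$ are defined by $f(x)/(x-\lambda)=\sum_{j=0}^{n-1}d_j(\lambda)x^j$; $e_j=d_j(\lambda)f'(\lambda)^{-1}(1,0)$ and $f_k=\lambda^k(0,1)$ in $V_2(GF(p^n))=GF(p^n)^2$. Symplectic product on $V_2(GF(p^n))$: $(\alpha,\beta)\circ(\alpha',\beta')=\beta\alpha'-\alpha\beta'$. On $V_{2n}(\mathbb{Z}_p)$, writing $w=(x_0,y_0,\dots,x_{n-1},y_{n-1})$: $w\circ w'=\sum_{i=0}^{n-1}(y_ix_i'-x_iy_i')\bmod p$. $C_\alpha=\{\beta(1,\alpha):\beta\in GF(p^n)\}$, $C_\infty=\{\beta(0,1):\beta\in GF(p^n)\}$. $S_{x,y}=\sum_{m=0}^{p-1}\eta^{mx}|m\rangle\langle m+y|$ on $\mathbb{C}^p$, $\eta=\exp(2\pi i/p)$; two tensor products $\bigotimes_iS_{x_i,y_i}$ and $\bigotimes_iS_{x_i',y_i'}$ commute iff $w\circ w'=0$. *)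

(* Defs.v *)
From HB Require Import structures.
From mathcomp Require Import all_boot all_order all_algebra all_field.
From mathcomp Require Import mxtens zify.
Set Implicit Arguments. Unset Strict Implicit. Unset Printing Implicit Defensive.
Import Order.TTheory GRing.Theory Num.Theory.
Local Open Scope ring_scope.

(* Embedding of Z_p = 'F_p into a field L (of characteristic p). *)
Definition fp2L (p : nat) (L : fieldType) (a : 'F_p) : L := (nat_of_ord a)%:R.

Definition fL (p : nat) (L : fieldType) (f : {poly 'F_p}) : {poly L} :=
  map_poly (@fp2L p L) f.

(* Z_p-scalar multiplication on V_2(GF(p^n)) = L * L *)
Definition scl (p : nat) (L : fieldType) (a : 'F_p) (u : L * L) : L * L :=
  (fp2L L a * u.1, fp2L L a * u.2).

Definition sympL (L : fieldType) (u v : L * L) : L := u.2 * v.1 - u.1 * v.2.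

Lemma xpos_proof (n : nat) (i : 'I_n) : (2 * i < 2 * n)%N.
Proof. by rewrite ltn_pmul2l. Qed.
Lemma ypos_proof (n : nat) (i : 'I_n) : (2 * i + 1 < 2 * n)%N.
Proof. have := ltn_ord i; lia. Qed.
Definition xpos (n : nat) (i : 'I_n) : 'I_(2 * n) := Ordinal (xpos_proof i).
Definition ypos (n : nat) (i : 'I_n) : 'I_(2 * n) := Ordinal (ypos_proof i).

(* symplectic product on V_{2n}(Z_p), w = (x_0,y_0,...,x_{n-1},y_{n-1}) *)
Definition sympV (p n : nat) (w w' : 'rV['F_p]_(2 * n)) : 'F_p :=
  \sum_(i < n) (w 0 (ypos i) * w' 0 (xpos i) - w 0 (xpos i) * w' 0 (ypos i)).

(* coordinates of alpha in the basis 1, lam, ..., lam^(n-1) (unique when it exists) *)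
Definition coords (p n : nat) (L : fieldType) (lam alpha : L) :
  option {ffun 'I_n -> 'F_p} :=
  [pick a : {ffun 'I_n -> 'F_p} |
     alpha == \sum_(i < n) fp2L L (a i) * lam ^+ i].

(* Tr(alpha) = sum over the roots lam_r of f of alpha(lam_r) *)
Definition Tr (p n : nat) (L : finFieldType) (f : {poly 'F_p}) (lam alpha : L) : L :=
  match coords p n lam alpha with
  | Some a => \sum_(r : L | root (fL L f) r) \sum_(i < n) fp2L L (a i) * r ^+ i
  | None => 0
  end.

Definition dcoef (p : nat) (L : fieldType) (f : {poly 'F_p}) (lam : L) (j : nat) : L :=
  ((fL L f) %/ ('X - lam%:P))`_j.

Definition ebas (p : nat) (L : fieldType) (f : {poly 'F_p}) (lam : L) (j : nat) : L * L :=
  (dcoef f lam j * ((fL L f)^`()).[lam]^-1, 0).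
Definition fbas (L : fieldType) (lam : L) (k : nat) : L * L := (0, lam ^+ k).

(* C_alpha (Some alpha) and C_infinity (None) *)
Definition Cset (L : finFieldType) (o : option L) : {set L * L} :=
  match o with
  | Some a => [set (b, b * a) | b : L]
  | None => [set (0, b) | b : L]
  end.

Definition isM (p n : nat) (L : finFieldType) (f : {poly 'F_p}) (lam : L)
  (M : L * L -> 'rV['F_p]_(2 * n)) : Prop :=
  [/\ forall (a : 'F_p) (u v : L * L), M (scl a u + v) = a *: M u + M v,
      forall j : 'I_n, M (ebas f lam j) = delta_mx 0 (xpos j) &
      forall j : 'I_n, M (fbas lam j) = delta_mx 0 (ypos j)].

(* eta = exp(2 pi i / p) in algC: p.-root (-1) is exp(i pi / p) (principal root) *)
Definition eta (p : nat) : algC := (p.-root (-1)) ^+ 2.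

Definition Smat (p : nat) (x y : 'F_p) : 'M[algC]_p :=
  \matrix_(i < p, j < p)
     (if (nat_of_ord j == (i + y) %% p)%N then eta p ^+ (i * x) else 0).

Fixpoint tensn (p k : nat) : ('I_k -> 'M[algC]_p) -> 'M[algC]_(p ^ k) :=
  match k with
  | 0 => fun _ => castmx (esym (expn0 p), esym (expn0 p)) 1%:M
  | k'.+1 => fun g =>
      castmx (esym (expnS p k'), esym (expnS p k'))
        (tensmx (g ord0) (@tensn p k' (fun i => g (lift ord0 i))))
  end.

Definition tensS (p n : nat) (w : 'rV['F_p]_(2 * n)) : 'M[algC]_(p ^ n) :=
  tensn (fun i : 'I_n => Smat (w 0 (xpos i)) (w 0 (ypos i))).

(* Main.v *)
Require Import Defs.
From HB Require Import structures.
From mathcomp Require Import all_boot all_order all_algebra all_field.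
From mathcomp Require Import mxtens zify ring.
Set Implicit Arguments. Unset Strict Implicit. Unset Printing Implicit Defensive.
Import GRing.Theory Num.Theory.
Local Open Scope ring_scope.

Lemma cast_mulmx m m' (e : m = m') (A B : 'M[algC]_m) :
  castmx (e, e) A *m castmx (e, e) B = castmx (e, e) (A *m B).
Proof. by case: m' / e. Qed.

Lemma castmxZ m m' (e : m = m') c (A : 'M[algC]_m) :
  castmx (e, e) (c *: A) = c *: castmx (e, e) A.
Proof. by case: m' / e. Qed.

Lemma tensZ m n (c d : algC) (A : 'M[algC]_m) (B : 'M[algC]_n) :
  tensmx (c *: A) (d *: B) = (c * d) *: tensmx A B.
Proof. by apply/matrixP => i j; rewrite !mxE mulrACA. Qed.

Lemma tensn_comm p k (g h : 'I_k -> 'M[algC]_p) (c : 'I_k -> algC) :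
  (forall i, g i *m h i = c i *: (h i *m g i)) ->
  tensn g *m tensn h = (\prod_i c i) *: (tensn h *m tensn g).
Proof.
elim: k g h c => [|k IH] g h c H.
  by rewrite big_ord0 scale1r.
rewrite /= !cast_mulmx !tensmx_mul H (IH _ _ (fun i => c (lift ord0 i))); last by move=> i; exact: H.
by rewrite tensZ castmxZ big_ord_recl.
Qed.

Section Tens.
Variable p : nat.
Hypothesis pr : prime p.

Local Notation e := (Defs.eta p).

Lemma eta_p : e ^+ p = 1.
Proof.
by rewrite /Defs.eta -exprM mulnC exprM rootCK ?prime_gt0 // expr2 mulN1r opprK.
Qed.

Lemma eta_mod m : e ^+ (m %% p) = e ^+ m.
Proof. by rewrite {2}(divn_eq m p) exprD mulnC exprM eta_p expr1n mul1r. Qed.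

Lemma eta_cong A B : (A%:R : 'F_p) = B%:R -> e ^+ A = e ^+ B.
Proof.
move=> h; rewrite -eta_mod -[in RHS]eta_mod.
by have := congr1 (@nat_of_ord _) h; rewrite !val_Fp_nat // => ->.
Qed.

Definition ph (a : 'F_p) : algC := e ^+ (a : nat).

Lemma Fp_natE' (a : 'F_p) : a = (a : nat)%:R.
Proof. by rewrite natr_Zp. Qed.

Lemma phD a b : ph (a + b) = ph a * ph b.
Proof.
rewrite /ph -exprD; apply: eta_cong.
by rewrite natrD -!Fp_natE'.
Qed.

Lemma ph0 : ph 0 = 1. Proof. by rewrite /ph expr0. Qed.

Lemma Smul x y x' y' :
  Smat x y *m Smat x' y' = ph (y * x' - x * y') *: (Smat x' y' *m Smat x y).
Proof.
have p0 := prime_gt0 pr.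
have E (a b a' b' : 'F_p) (i k : 'I_p) : (Smat a b *m Smat a' b') i k =
    if (k == ((i + b + b') %% p)%N :> nat) then e ^+ (i * a + ((i + b) %% p) * a')%N else 0.
  have hj : ((i + b) %% p < p)%N by rewrite ltn_mod.
  rewrite !mxE (bigD1 (Ordinal hj)) //= big1 => [|j /negbTE nj]; last first.
    by rewrite !mxE; move: nj; rewrite -val_eqE /= => ->; rewrite mul0r.
  rewrite !mxE /= eqxx addr0 modnDml; case: ifP => _; last by rewrite mulr0.
  by rewrite -exprD.
apply/matrixP => i k; rewrite E [in RHS]mxE E addnAC; case: ifP => _; last by rewrite mulr0.
rewrite /ph -exprD; apply: eta_cong.
rewrite !natrD !natrM !(Fp_nat_mod pr) !natrD -!Fp_natE'.
ring.
Qed.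

Lemma tensS_comm n (w w' : 'rV['F_p]_(2 * n)) :
  sympV w w' = 0 -> tensS w *m tensS w' = tensS w' *m tensS w.
Proof.
move=> h; rewrite /tensS (tensn_comm (c := fun i : 'I_n =>
  ph (w 0 (ypos i) * w' 0 (xpos i) - w 0 (xpos i) * w' 0 (ypos i)))); last first.
  by move=> i; apply: Smul.
by rewrite -(big_morph ph phD ph0) -/(sympV w w') h ph0 scale1r.
Qed.
End Tens.

Section Fp.
Variables (p : nat) (L : fieldType).
Hypotheses (pr : prime p) (chL : p \in [pchar L]).

Lemma fp2L_natr m : fp2L L (m%:R : 'F_p) = m%:R.
Proof. by rewrite /fp2L val_Fp_nat // (GRing.natr_mod_pchar chL). Qed.

Lemma Fp_natE (a : 'F_p) : a = (a : nat)%:R.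
Proof. by rewrite natr_Zp. Qed.

Lemma fp2L_add (a b : 'F_p) : fp2L L (a + b) = fp2L L a + fp2L L b.
Proof. by rewrite [a]Fp_natE [b]Fp_natE -natrD !fp2L_natr natrD. Qed.

Lemma fp2L_is_zmod : zmod_morphism (@fp2L p L).
Proof.
move=> a b; apply: (addIr (fp2L L b)); rewrite -fp2L_add subrK.
by rewrite subrK.
Qed.

Lemma fp2L_is_monoid : monoid_morphism (@fp2L p L).
Proof.
split; first by rewrite -[1]/(1%:R) fp2L_natr.
by move=> a b; rewrite [a]Fp_natE [b]Fp_natE -natrM !fp2L_natr natrM.
Qed.

End Fp.

Section Main.
Variables (p n : nat) (L : finFieldType) (f : {poly 'F_p}) (lam : L) (s : seq L).
Hypotheses (pr : prime p) (n0 : (0 < n)%N) (chL : p \in [pchar L])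
  (cardL : #|L| = (p ^ n)%N) (mon : f \is monic) (szf : size f = n.+1)
  (irr : irreducible_poly f) (us : uniq s) (ss : size s = n)
  (fs : fL L f = \prod_(r <- s) ('X - r%:P)) (rl : root (fL L f) lam).

Local Notation phi := (@fp2L p L).

Let fzm := fp2L_is_zmod pr chL.
Let fmm := fp2L_is_monoid pr chL.
HB.instance Definition _ := GRing.isZmodMorphism.Build _ _ phi fzm.
HB.instance Definition _ := GRing.isMonoidMorphism.Build _ _ phi fmm.

Lemma rootsE r : root (fL L f) r = (r \in s).
Proof. by rewrite fs root_prod_XsubC. Qed.

Lemma sumrootsE (F : L -> L) :
  \sum_(r : L | root (fL L f) r) F r = \sum_(r <- s) F r.
Proof. by rewrite (big_uniq _ us); apply: eq_bigl => r; rewrite rootsE. Qed.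

Lemma root_dvd r h : root (fL L f) r -> root (fL L h) r -> (f %| h)%R.
Proof.
move=> rf rh; have := irredp_XsubCP irr (dvdp_gcdl f h); case=> [g1|gf].
  have cop : coprimep f h by rewrite coprimep_def -size_poly_eq1 in g1 *.
  rewrite -(coprimep_map phi) in cop.
  by move: (coprimep_root cop rf); rewrite -/(root _ _) rh.
by rewrite -(eqp_dvdl _ gf) dvdp_gcdr.
Qed.

Lemma fL_root_dvd r h : root (fL L f) r -> (f %| h)%R -> root (fL L h) r.
Proof.
move=> rf /dvdpP [q ->]; by rewrite /root /fL rmorphM hornerM -/(fL L f) (eqP rf) mulr0.
Qed.

Definition ev (r : L) (a : {ffun 'I_n -> 'F_p}) : L := \sum_(i < n) phi (a i) * r ^+ i.
Definition Pa (a : {ffun 'I_n -> 'F_p}) : {poly 'F_p} := \sum_(i < n) a i *: 'X^i.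

Lemma evE r a : ev r a = (fL L (Pa a)).[r].
Proof.
rewrite /fL /Pa rmorph_sum horner_sum; apply: eq_bigr => i _.
by rewrite /= map_polyZ map_polyXn hornerZ hornerXn.
Qed.

Lemma size_Pa a : (size (Pa a) <= n)%N.
Proof.
rewrite /Pa; apply: (big_ind (fun q : {poly 'F_p} => size q <= n)%N).
- by rewrite size_poly0.
- by move=> x y hx hy; rewrite (leq_trans (size_polyD _ _)) // geq_max hx hy.
- move=> i _; rewrite (leq_trans (size_scale_leq _ _)) // size_polyXn; exact: ltn_ord.
Qed.

Lemma coef_Pa a (i : 'I_n) : (Pa a)`_i = a i.
Proof.
rewrite /Pa coef_sum (bigD1 i) //= coefZ coefXn eqxx mulr1 big1 ?addr0 //.
by move=> j ji; rewrite coefZ coefXn (inj_eq val_inj) eq_sym (negbTE ji) mulr0.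
Qed.

Lemma fL_sub_ev r a b : (fL L (Pa a - Pa b)).[r] = ev r a - ev r b.
Proof. by rewrite !evE /fL rmorphB /= hornerD hornerN. Qed.

Lemma ev_inj : injective (ev lam).
Proof.
move=> a b eab.
have dv : (f %| Pa a - Pa b)%R.
  by apply: (root_dvd rl); rewrite /root fL_sub_ev eab subrr.
have [e0|nz] := eqVneq (Pa a - Pa b) 0.
  apply/ffunP => i; apply/eqP; rewrite -subr_eq0 -!coef_Pa -coefB e0 coef0 //.
have := dvdp_leq nz dv; rewrite szf.
have : (size (Pa a - Pa b)%R <= n)%N.
  by rewrite (leq_trans (size_polyD _ _)) // geq_max size_Pa size_polyN size_Pa.
move=> h1 h2; have := leq_trans h2 h1; by rewrite ltnn.
Qed.

Lemma ev_bij : bijective (ev lam).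
Proof.
apply: inj_card_bij; first exact: ev_inj.
by rewrite card_ffun !card_ord cardL Fp_cast.
Qed.

Lemma ev_surj x : exists a, ev lam a = x.
Proof. by have [g _ gK] := ev_bij; exists (g x); rewrite gK. Qed.

Lemma reprL x : exists g : {poly 'F_p}, x = (fL L g).[lam].
Proof. by have [a <-] := ev_surj x; exists (Pa a); rewrite evE. Qed.

Local Notation Tr' := (Tr n f lam).

Lemma TrE (g : {poly 'F_p}) : Tr' (fL L g).[lam] = \sum_(r <- s) (fL L g).[r].
Proof.
rewrite /Tr /coords; case: pickP => [a /eqP ha | none].
  rewrite sumrootsE; apply: eq_big_seq => r rs.
  have dv : (f %| Pa a - g)%R.
    apply: (root_dvd rl); rewrite /root /fL rmorphB /= hornerD hornerN -/(fL L _) -evE.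
    by rewrite -/(fL L g) (_ : ev lam a = (fL L g).[lam]) ?subrr.
  have := fL_root_dvd (r := r) _ dv; rewrite rootsE rs => /(_ isT).
  rewrite /root /fL rmorphB /= hornerD hornerN -/(fL L _) -evE subr_eq0 => /eqP.
  by [].
exfalso; have [a ha] := ev_surj (fL L g).[lam].
by have := none a; rewrite -ha eqxx.
Qed.

Lemma TrL c x y : Tr' (phi c * x + y) = phi c * Tr' x + Tr' y.
Proof.
have [g ->] := reprL x; have [h ->] := reprL y.
have -> : phi c * (fL L g).[lam] + (fL L h).[lam] = (fL L (c *: g + h)).[lam].
  by rewrite /fL rmorphD /= map_polyZ hornerD hornerZ.
rewrite !TrE mulr_sumr -big_split /=; apply: eq_bigr => r _.
by rewrite /fL rmorphD /= map_polyZ hornerD hornerZ.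
Qed.

Lemma Tr0 : Tr' 0 = 0.
Proof.
have := TrE 0; rewrite /fL rmorph0 horner0 => ->.
by rewrite big1 // => r _; rewrite horner0.
Qed.

Lemma TrD x y : Tr' (x + y) = Tr' x + Tr' y.
Proof. by have := TrL 1 x y; rewrite rmorph1 !mul1r. Qed.

Lemma TrZ c x : Tr' (phi c * x) = phi c * Tr' x.
Proof. by have := TrL c x 0; rewrite !addr0 Tr0 addr0. Qed.

Lemma TrN x : Tr' (- x) = - Tr' x.
Proof. by have := TrZ (-1) x; rewrite rmorphN1 !mulN1r. Qed.

Lemma TrS (I : finType) (c : I -> 'F_p) (z : I -> L) :
  Tr' (\sum_i phi (c i) * z i) = \sum_i phi (c i) * Tr' (z i).
Proof.
rewrite (big_morph Tr' TrD Tr0); apply: eq_bigr => i _; exact: TrZ.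
Qed.

Definition Q (r : L) := fL L f %/ ('X - r%:P).

Lemma QK r : r \in s -> ('X - r%:P) * Q r = fL L f.
Proof. by move=> rs; rewrite divpKC // dvdp_XsubCl rootsE. Qed.

Lemma Q_other r t : r \in s -> t \in s -> t != r -> (Q r).[t] = 0.
Proof.
move=> rs ts tr; have := congr1 (horner^~ t) (QK rs).
rewrite hornerM hornerXsubC; have := rootsE t; rewrite ts /root => /eqP -> /eqP.
by rewrite mulf_eq0 subr_eq0 (negbTE tr) /= => /eqP.
Qed.

Lemma Q_self r : r \in s -> (Q r).[r] = ((fL L f)^`()).[r].
Proof.
move=> rs; rewrite -(QK rs) derivM derivXsubC hornerD !hornerM hornerXsubC subrr.
by rewrite mul0r addr0 hornerC mul1r.
Qed.

Lemma Q_self_neq0 r : r \in s -> (Q r).[r] != 0.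
Proof.
move=> rs; have Qe : Q r = \prod_(t <- rem r s) ('X - t%:P).
  rewrite /Q fs (perm_big _ (perm_to_rem rs)) big_cons /= mulrC mulpK //.
  by rewrite polyXsubC_eq0.
rewrite Qe -/(root _ r) root_prod_XsubC mem_rem_uniqF //.
Qed.

Lemma size_fL : size (fL L f) = n.+1.
Proof. by rewrite /fL size_map_poly szf. Qed.

Lemma size_Q r : size (Q r) = n.
Proof. by rewrite /Q size_divp ?polyXsubC_eq0 // size_fL size_XsubC subn1. Qed.

Local Notation fd r := (((fL L f)^`()).[r]).

Lemma lagrange k : (k < n)%N ->
  \sum_(r <- s) (r ^+ k / fd r) *: Q r = 'X^k.
Proof.
move=> kn; apply/eqP; rewrite -subr_eq0; apply/eqP.
apply: (roots_geq_poly_eq0 (rs := s)) => //.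
- apply/allP => t ts; rewrite /root hornerD hornerN horner_sum (bigD1_seq t) //=.
  rewrite big_seq_cond big1 => [|r /andP[rs rt]]; last first.
    by rewrite hornerZ Q_other // ?mulr0 // eq_sym.
  rewrite hornerZ Q_self // addr0 mulfVK; first by rewrite hornerXn subrr.
  by rewrite -Q_self // Q_self_neq0.
- rewrite ss (leq_trans (size_polyD _ _)) // geq_max size_polyN size_polyXn kn andbT.
  apply: (big_ind (fun q : {poly L} => size q <= n)%N).
  + by rewrite size_poly0.
  + by move=> x y hx hy; rewrite (leq_trans (size_polyD _ _)) // geq_max hx hy.
  + by move=> r _; rewrite (leq_trans (size_scale_leq _ _)) // size_Q.
Qed.

Lemma lagrange_coef k j : (k < n)%N ->
  \sum_(r <- s) r ^+ k / fd r * (Q r)`_j = (j == k)%:R.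
Proof.
move=> kn; have := congr1 (fun q : {poly L} => q`_j) (lagrange kn).
by rewrite /= coef_sum coefXn => <-; apply: eq_bigr => r _; rewrite coefZ.
Qed.

Lemma inner_sum (r : L) (i j : nat) :
  \sum_(m < i) (if (i.-1 - m == j)%N then r ^+ m else 0) =
  if (j < i)%N then r ^+ (i.-1 - j) else 0.
Proof.
case: ltnP => ji.
  have hk : (i.-1 - j < i)%N by lia.
  rewrite (bigD1 (Ordinal hk)) //= (_ : (i.-1 - (i.-1 - j) == j)%N) ?big1 ?addr0 //.
    move=> m /eqP mne; case: ifP => // /eqP e; exfalso; apply: mne.
    by apply: val_inj => /=; have := ltn_ord m; lia.
  by apply/eqP; lia.
rewrite big1 // => m _; case: ifP => // /eqP e; exfalso; have := ltn_ord m; lia.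
Qed.

Definition Dp (j : nat) : {poly 'F_p} :=
  \sum_(i < n.+1) (if (j < i)%N then f`_i *: 'X^(i.-1 - j) else 0).

Lemma fL_expand : fL L f = \sum_(i < n.+1) phi f`_i *: 'X^i.
Proof.
rewrite -{1}[fL L f]coefK poly_def size_fL; apply: eq_bigr => i _.
by rewrite /fL coef_map.
Qed.

Lemma Q_coef r j : r \in s -> (Q r)`_j = (fL L (Dp j)).[r].
Proof.
move=> rs.
pose W := \sum_(i < n.+1) phi f`_i *: \sum_(m < i) 'X^(i.-1 - m) * (r ^+ m)%:P.
have eW : Q r = W.
  apply: (mulfI (x := 'X - r%:P)); first by rewrite polyXsubC_eq0.
  rewrite QK // /W mulr_sumr.
  have -> : fL L f = fL L f - ((fL L f).[r])%:P.
    by have := rootsE r; rewrite rs /root => /eqP ->; rewrite subr0.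
  rewrite {2}fL_expand horner_sum rmorph_sum /= {1}fL_expand -sumrB.
  apply: eq_bigr => i _; rewrite hornerZ hornerXn -scalerAr.
  rewrite -scale_polyC -scalerBr; congr (_ *: _).
  rewrite rmorphXn subrXX; congr (_ * _); apply: eq_bigr => m _.
  by rewrite rmorphXn.
rewrite eW /W coef_sum /Dp /fL rmorph_sum horner_sum /=; apply: eq_bigr => i _.
rewrite coefZ coef_sum; case: ifP => ji; last first.
  rewrite rmorph0 horner0.
  have -> : \sum_(m < i) ('X^(i.-1 - m) * (r ^+ m)%:P)`_j =
            \sum_(m < i) (if (i.-1 - m == j)%N then r ^+ m else 0).
    by apply: eq_bigr => m _; rewrite coefMC coefXn eq_sym; case: eqP => _; rewrite ?mul1r ?mul0r.
  by rewrite inner_sum ji mulr0.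
have -> : \sum_(m < i) ('X^(i.-1 - m) * (r ^+ m)%:P)`_j =
            \sum_(m < i) (if (i.-1 - m == j)%N then r ^+ m else 0).
  by apply: eq_bigr => m _; rewrite coefMC coefXn eq_sym; case: eqP => _; rewrite ?mul1r ?mul0r.
by rewrite inner_sum ji map_polyZ map_polyXn hornerZ hornerXn.
Qed.

Lemma fd_neq0 r : r \in s -> fd r != 0.
Proof. by move=> rs; rewrite -Q_self // Q_self_neq0. Qed.

Lemma lam_in : lam \in s.
Proof. by rewrite -rootsE. Qed.

Lemma exH : exists H : {poly 'F_p}, forall r, r \in s -> (fL L H).[r] = (fd r)^-1.
Proof.
have [H eH] := reprL (fd lam)^-1; exists H => r rs.
have dv : (f %| H * f^`() - 1)%R.
  apply: (root_dvd rl); rewrite /root /fL rmorphB rmorphM rmorph1 /=.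
  rewrite -deriv_map -/(fL L f) hornerD hornerN hornerM hornerC -/(fL L H) -eH.
  by rewrite mulVf ?subrr // fd_neq0 // lam_in.
have := fL_root_dvd (r := r) _ dv; rewrite rootsE rs => /(_ isT).
rewrite /root /fL rmorphB rmorphM rmorph1 /= -deriv_map -/(fL L f) hornerD hornerN.
rewrite hornerM hornerC subr_eq0 => /eqP h.
by rewrite -[LHS]mulr1 -(mulfV (fd_neq0 rs)) mulrA h mul1r.
Qed.

Definition Eb (j : nat) : L := dcoef f lam j * (fd lam)^-1.

Lemma euler j k : (k < n)%N -> Tr n f lam (lam ^+ k * Eb j) = (j == k)%:R.
Proof.
move=> kn; have [H eH] := exH.
have e r : r \in s -> r ^+ k * ((Q r)`_j * (fd r)^-1) = (fL L ('X^k * Dp j * H)).[r].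
  move=> rs; rewrite /fL !rmorphM /= map_polyXn !hornerM hornerXn -!/(fL L _).
  by rewrite -Q_coef // eH // mulrA.
rewrite /Eb (e _ lam_in) TrE -(lagrange_coef j kn); apply: eq_big_seq => r rs.
by rewrite -e // mulrA mulrAC.
Qed.

Definition evb (a : {ffun 'I_n -> 'F_p}) : L := \sum_(j < n) phi (a j) * Eb j.

Lemma Tr_evb (k : 'I_n) a : Tr n f lam (lam ^+ k * evb a) = phi (a k).
Proof.
rewrite /evb mulr_sumr (eq_bigr (fun j => phi (a j) * (lam ^+ k * Eb j))); last first.
  by move=> j _; rewrite mulrCA.
rewrite TrS (bigD1 k) //= euler // eqxx mulr1 big1 ?addr0 // => j jk.
by rewrite euler // (inj_eq val_inj) (negbTE jk) mulr0.
Qed.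

Lemma evb_inj : injective evb.
Proof.
move=> a b eab; apply/ffunP => k.
have := congr1 (fun x => Tr n f lam (lam ^+ k * x)) eab; rewrite /= !Tr_evb.
exact: (fmorph_inj phi).
Qed.

Lemma evb_bij : bijective evb.
Proof.
apply: inj_card_bij; first exact: evb_inj.
by rewrite card_ffun !card_ord cardL Fp_cast.
Qed.

Definition acoef (x : L) : {ffun 'I_n -> 'F_p} := odflt [ffun => 0] [pick a | evb a == x].
Definition bcoef (x : L) : {ffun 'I_n -> 'F_p} := odflt [ffun => 0] [pick a | ev lam a == x].

Lemma acoefK x : evb (acoef x) = x.
Proof.
rewrite /acoef; case: pickP => [a /eqP //| none].
have [g _ gK] := evb_bij; by have := none (g x); rewrite gK eqxx.
Qed.

Lemma bcoefK x : ev lam (bcoef x) = x.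
Proof.
rewrite /bcoef; case: pickP => [a /eqP //| none].
have [g _ gK] := ev_bij; by have := none (g x); rewrite gK eqxx.
Qed.

Lemma evbK a : acoef (evb a) = a.
Proof. by apply: evb_inj; rewrite acoefK. Qed.

Lemma evK a : bcoef (ev lam a) = a.
Proof. by apply: ev_inj; rewrite bcoefK. Qed.

Lemma evb_lin c (a b : {ffun 'I_n -> 'F_p}) : evb [ffun j => c * a j + b j] = phi c * evb a + evb b.
Proof.
rewrite /evb mulr_sumr -big_split /=; apply: eq_bigr => j _.
by rewrite ffunE rmorphD rmorphM mulrDl mulrA.
Qed.

Lemma ev_lin c (a b : {ffun 'I_n -> 'F_p}) : ev lam [ffun j => c * a j + b j] = phi c * ev lam a + ev lam b.
Proof.
rewrite /ev mulr_sumr -big_split /=; apply: eq_bigr => j _.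
by rewrite ffunE rmorphD rmorphM mulrDl mulrA.
Qed.

Lemma acoef_lin c x y : acoef (phi c * x + y) = [ffun j => c * acoef x j + acoef y j].
Proof. by apply: evb_inj; rewrite evb_lin !acoefK. Qed.

Lemma bcoef_lin c x y : bcoef (phi c * x + y) = [ffun j => c * bcoef x j + bcoef y j].
Proof. by apply: ev_inj; rewrite ev_lin !bcoefK. Qed.

Lemma acoef_Eb (j : 'I_n) : acoef (Eb j) = [ffun i => (i == j)%:R].
Proof.
apply: evb_inj; rewrite acoefK /evb (bigD1 j) //= ffunE eqxx rmorph1 mul1r.
rewrite big1 ?addr0 // => i ij; by rewrite ffunE (negbTE ij) rmorph0 mul0r.
Qed.

Lemma bcoef_lam (j : 'I_n) : bcoef (lam ^+ j) = [ffun i => (i == j)%:R].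
Proof.
apply: ev_inj; rewrite bcoefK /ev (bigD1 j) //= ffunE eqxx rmorph1 mul1r.
rewrite big1 ?addr0 // => i ij; by rewrite ffunE (negbTE ij) rmorph0 mul0r.
Qed.

Lemma acoef0 : acoef 0 = [ffun => 0].
Proof.
apply: evb_inj; rewrite acoefK /evb big1 // => j _; by rewrite ffunE rmorph0 mul0r.
Qed.

Lemma bcoef0 : bcoef 0 = [ffun => 0].
Proof.
apply: ev_inj; rewrite bcoefK /ev big1 // => j _; by rewrite ffunE rmorph0 mul0r.
Qed.

Definition M0 (u : L * L) : 'rV['F_p]_(2 * n) :=
  \sum_(j < n) (acoef u.1 j *: delta_mx 0 (xpos j) + bcoef u.2 j *: delta_mx 0 (ypos j)).

Lemma xposE (i j : 'I_n) : (xpos i == xpos j) = (i == j).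
Proof. by rewrite -!val_eqE /=; apply/eqP/eqP; lia. Qed.
Lemma yposE (i j : 'I_n) : (ypos i == ypos j) = (i == j).
Proof. by rewrite -!val_eqE /=; apply/eqP/eqP; lia. Qed.
Lemma xyposE (i j : 'I_n) : (xpos i == ypos j) = false.
Proof. by rewrite -!val_eqE /=; apply/eqP; lia. Qed.

Lemma M0x u i : M0 u 0 (xpos i) = acoef u.1 i.
Proof.
rewrite /M0 summxE (bigD1 i) //= !mxE xposE xyposE !eqxx /= mulr1 mulr0 addr0.
rewrite big1 ?addr0 // => j ji; rewrite !mxE eqxx xposE xyposE eq_sym (negbTE ji) /=.
by rewrite !mulr0 addr0.
Qed.

Lemma M0y u i : M0 u 0 (ypos i) = bcoef u.2 i.
Proof.
rewrite /M0 summxE (bigD1 i) //= !mxE yposE eq_sym xyposE !eqxx /= mulr1 mulr0 add0r.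
rewrite big1 ?addr0 // => j ji; rewrite !mxE eqxx yposE eq_sym xyposE eq_sym (negbTE ji) /=.
by rewrite !mulr0 addr0.
Qed.

Lemma phi1 : phi 1 = 1.
Proof. exact: rmorph1. Qed.

Lemma isM0 : isM f lam M0.
Proof.
split.
- move=> a u v; rewrite /M0 /= acoef_lin bcoef_lin scaler_sumr -big_split /=.
  apply: eq_bigr => j _; rewrite !ffunE !scalerDl !scalerDr !scalerA.
  by rewrite addrACA.
- move=> j; rewrite /M0 /= (_ : dcoef f lam j * _ = Eb j) // acoef_Eb bcoef0.
  rewrite (bigD1 j) //= !ffunE eqxx scale1r scale0r addr0 big1 ?addr0 // => i ij.
  by rewrite !ffunE (negbTE ij) !scale0r addr0.
- move=> j; rewrite /M0 /= bcoef_lam acoef0.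
  rewrite (bigD1 j) //= !ffunE eqxx scale1r scale0r add0r big1 ?addr0 // => i ij.
  by rewrite !ffunE (negbTE ij) !scale0r addr0.
Qed.

Lemma M_eq M : isM f lam M -> M =1 M0.
Proof.
case=> Ml Me Mf.
have M00 : M 0 = 0.
  have h := Ml 1 0 0; rewrite scale1r in h.
  have e : scl (1 : 'F_p) (0 : (L * L)%type) + 0 = 0.
    by rewrite /scl /= rmorph1 !mul1r addr0.
  rewrite e in h; apply: (@addIr _ (M 0)); by rewrite add0r -h.
have MD x y : M (x + y) = M x + M y.
  have := Ml 1 x y; rewrite scale1r /scl phi1 !mul1r -surjective_pairing.
  by [].
have MZ a x : M (scl a x) = a *: M x.
  by have := Ml a x 0; rewrite M00 !addr0.
move=> u.
have eu : u = \sum_(j < n) (scl (acoef u.1 j) (ebas f lam j) + scl (bcoef u.2 j) (fbas lam j)).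
  rewrite [u in LHS]surjective_pairing [RHS]surjective_pairing; congr (_, _).
  - rewrite -[LHS]acoefK /evb (big_morph (fun x : L * L => x.1) (id1 := 0) (op1 := +%R)) //.
    by apply: eq_bigr => j _; rewrite /= mulr0 addr0.
  - rewrite -[LHS]bcoefK /ev (big_morph (fun x : L * L => x.2) (id1 := 0) (op1 := +%R)) //.
    by apply: eq_bigr => j _; rewrite /= mulr0 add0r.
rewrite [in LHS]eu (big_morph M MD M00) /M0; apply: eq_bigr => j _.
by rewrite MD !MZ Me Mf.
Qed.

Lemma M0_inj : injective M0.
Proof.
move=> u v e.
have ha : acoef u.1 = acoef v.1 by apply/ffunP => i; rewrite -!M0x e.
have hb : bcoef u.2 = bcoef v.2 by apply/ffunP => i; rewrite -!M0y e.
rewrite [u]surjective_pairing [v]surjective_pairing.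
by rewrite -(acoefK u.1) -(bcoefK u.2) ha hb !acoefK !bcoefK.
Qed.

Lemma M0_bij : bijective M0.
Proof.
apply: inj_card_bij; first exact: M0_inj.
by rewrite card_mx card_prod cardL card_ord Fp_cast // -expnD; apply: leq_pexp2l; [exact: prime_gt0 | lia].
Qed.

Lemma TrPair b a : Tr n f lam (ev lam b * evb a) = \sum_i phi (b i) * phi (a i).
Proof.
rewrite /ev mulr_suml (eq_bigr (fun k => phi (b k) * (lam ^+ k * evb a))); last first.
  by move=> k _; rewrite mulrA.
by rewrite TrS; apply: eq_bigr => k _; rewrite Tr_evb.
Qed.

Lemma sympTr u1 u2 : phi (sympV (M0 u1) (M0 u2)) = Tr n f lam (sympL u1 u2).
Proof.
rewrite /sympL -[u1.2]bcoefK -[u2.1]acoefK -[u1.1]acoefK -[u2.2]bcoefK.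
rewrite [evb _ * _]mulrC TrD TrN !TrPair -sumrB /sympV rmorph_sum.
apply: eq_bigr => i _; rewrite !M0x !M0y rmorphB !rmorphM.
by rewrite [phi (acoef _ _) * _]mulrC.
Qed.

Lemma pairD (x y x' y' : L) : (x, y) + (x', y') = (x + x', y + y').
Proof. by []. Qed.

Lemma Cset_lin (o : option L) (a : 'F_p) u v : u \in Cset o -> v \in Cset o -> scl a u + v \in Cset o.
Proof.
case: o => [al|] /= /imsetP[b _ ->] /imsetP[b' _ ->]; apply/imsetP.
  exists (phi a * b + b') => //; rewrite /scl /=.
  by rewrite mulrDl mulrA.
by exists (phi a * b + b') => //; rewrite /scl /= pairD mulr0 addr0.
Qed.

Lemma Cset0 (o : option L) : (0 : (L * L)%type) \in Cset o.
Proof.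
case: o => [al|] /=; apply/imsetP; exists 0 => //.
by rewrite mul0r.
Qed.

Lemma Cset_card (o : option L) : #|Cset o| = #|L|.
Proof.
case: o => [al|] /=; rewrite card_imset ?cardT ?size_enum //.
  by move=> x y [].
by move=> x y [].
Qed.

Lemma Cset_symp (o : option L) u v : u \in Cset o -> v \in Cset o -> sympL u v = 0.
Proof.
case: o => [al|] /= /imsetP[b _ ->] /imsetP[b' _ ->]; rewrite /sympL /=.
  by rewrite mulrAC -mulrA subrr.
by rewrite mulr0 mul0r subrr.
Qed.

Lemma Cset_inter (o o' : option L) : o != o' -> Cset o :&: Cset o' = [set (0 : (L * L)%type)].
Proof.
move=> ne; apply/setP => u; rewrite inE in_set1; apply/andP/eqP; last first.
  by move=> ->; rewrite !Cset0.
case: o o' ne => [al|] [al'|] //= ne [/imsetP[b _ ->] /imsetP[b' _ e]].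
- case: e => e1 e2; move: e2; rewrite e1 => /eqP; rewrite -subr_eq0 -mulrBr mulf_eq0.
  rewrite subr_eq0; case/orP => [/eqP -> | /eqP eal]; first by rewrite mul0r.
  by move: ne; rewrite eal eqxx.
- by case: e => -> _; rewrite mul0r.
- by case: e => e1 ->; rewrite -e1 mul0r.
Qed.

Lemma M0_0 : M0 0 = 0.
Proof.
rewrite /M0 /= acoef0 bcoef0 big1 // => j _; by rewrite !ffunE !scale0r addr0.
Qed.

Lemma phi_eq0 x : phi x = 0 -> x = 0.
Proof. by move=> h; apply: (fmorph_inj phi); rewrite rmorph0; exact: h. Qed.

Lemma main_sec : (exists M : L * L -> 'rV['F_p]_(2 * n), isM f lam M) /\
  forall M : L * L -> 'rV['F_p]_(2 * n), isM f lam M ->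
  [/\ bijective M,
      (forall u1 u2 : L * L, fp2L L (sympV (M u1) (M u2)) = Tr n f lam (sympL u1 u2)),
      injective (fun o : option L => M @: Cset o),
      (forall o : option L,
         [/\ #|M @: Cset o| = (p ^ n)%N,
             0 \in M @: Cset o,
             (forall (a : 'F_p) (w w' : 'rV['F_p]_(2 * n)),
                 w \in M @: Cset o -> w' \in M @: Cset o -> a *: w + w' \in M @: Cset o),
             (forall w w', w \in M @: Cset o -> w' \in M @: Cset o -> sympV w w' = 0) &
             (forall w w', w \in M @: Cset o -> w' \in M @: Cset o ->
                 tensS w *m tensS w' = tensS w' *m tensS w)]) &
      (forall o o' : option L, o != o' -> (M @: Cset o) :&: (M @: Cset o') = [set 0])].
Proof.
split; first by exists M0; exact: isM0.
move=> M HM; case: (HM) => Ml _ _.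
have Me := M_eq HM.
have Mbij : bijective M := eq_bij M0_bij (fun u => esym (Me u)).
have Minj := bij_inj Mbij.
have M0' : M 0 = 0 by rewrite Me M0_0.
have tr u1 u2 : fp2L L (sympV (M u1) (M u2)) = Tr n f lam (sympL u1 u2).
  by rewrite !Me sympTr.
have card o : #|M @: Cset o| = (p ^ n)%N by rewrite card_imset // Cset_card.
have inter o o' : o != o' -> (M @: Cset o) :&: (M @: Cset o') = [set 0].
  move=> ne; rewrite -imsetI; last by move=> x y _ _; exact: Minj.
  by rewrite Cset_inter // imset_set1 M0'.
have sym0 o w w' : w \in M @: Cset o -> w' \in M @: Cset o -> sympV w w' = 0.
  move=> /imsetP[u hu ->] /imsetP[v hv ->]; apply: phi_eq0.
  by rewrite tr (Cset_symp hu hv) Tr0.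
split => //.
- move=> o o' /= e; case: (eqVneq o o') => // ne; exfalso.
  have := inter o o' ne; rewrite e setIid => h.
  have := card o'; rewrite h cards1 => h1.
  have : (1 < p ^ n)%N by rewrite -{1}(expn0 p) ltn_exp2l ?prime_gt1.
  by rewrite -h1.
- move=> o; split => //.
  + by rewrite -M0'; apply: imset_f; exact: Cset0.
  + move=> a w w' /imsetP[u hu ->] /imsetP[v hv ->]; rewrite -Ml.
    by apply: imset_f; exact: Cset_lin.
  + exact: sym0.
  + by move=> w w' hw hw'; apply: (tensS_comm pr); exact: (sym0 _ _ _ hw hw').
Qed.
End Main.

Theorem mainTheorem13 (p n : nat) (L : finFieldType) (f : {poly 'F_p}) (lam : L) :
  prime p -> (0 < n)%N ->
  p \in [pchar L] -> #|L| = (p ^ n)%N ->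
  f \is monic -> size f = n.+1 -> irreducible_poly f ->
  (exists s : seq L, [/\ uniq s, size s = n & fL L f = \prod_(r <- s) ('X - r%:P)]) ->
  root (fL L f) lam ->
  (exists M : L * L -> 'rV['F_p]_(2 * n), isM f lam M) /\
  forall M : L * L -> 'rV['F_p]_(2 * n), isM f lam M ->
  [/\ bijective M,
      (forall u1 u2 : L * L, fp2L L (sympV (M u1) (M u2)) = Tr n f lam (sympL u1 u2)),
      injective (fun o : option L => M @: Cset o),
      (forall o : option L,
         [/\ #|M @: Cset o| = (p ^ n)%N,
             0 \in M @: Cset o,
             (forall (a : 'F_p) (w w' : 'rV['F_p]_(2 * n)),
                 w \in M @: Cset o -> w' \in M @: Cset o -> a *: w + w' \in M @: Cset o),
             (forall w w', w \in M @: Cset o -> w' \in M @: Cset o -> sympV w w' = 0) &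
             (forall w w', w \in M @: Cset o -> w' \in M @: Cset o ->
                 tensS w *m tensS w' = tensS w' *m tensS w)]) &
      (forall o o' : option L, o != o' -> (M @: Cset o) :&: (M @: Cset o') = [set 0])].
Proof.
move=> pr n0 chL cardL mon szf irr [s [us ss fs]] rl.
exact: (main_sec pr n0 chL cardL mon szf irr us ss fs rl).
Qed.
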